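(* Let $A\subset\mathbb{R}$, let $f:A\to\mathbb{R}$ be a function and let $a,L\in\mathbb{R}$. Then the following are equivalent: (i) for every real $\varepsilon>0$ there exists a real $\delta_\varepsilon>0$ such that $$\left\{x\in\left((a-\delta_{\varepsilon},a+\delta_{\varepsilon})\setminus\{a\}\right)\cap A:\ |f(x)-L|\geq\varepsilon\right\}=\varnothing;$$ (ii) for every real $\varepsilon>0$ there exists a real $\delta_\varepsilon>0$ such that the set $$\left\{x\in\left((a-\delta_{\varepsilon},a+\delta_{\varepsilon})\setminus\{a\}\right)\cap A:\ |f(x)-L|\geq\varepsilon\right\}$$ is finite. That is, $T_1\lim_{x\to a}f(x)=L$ if and only if $T_3\lim_{x\to a}f(x)=L$.
   Context: Condition (i) is the classical limit, written $T_1\lim_{x\to a}f(x)=L$; condition (ii) defines the notion written $T_3\lim_{x\to a}f(x)=L$. *)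

(* Defs.v *)
From Stdlib Require Import Reals List.
Open Scope R_scope.

Definition exc_set (A : R -> Prop) (f : R -> R) (a L d eps : R) : R -> Prop :=
  fun x => (a - d < x < a + d /\ x <> a) /\ A x /\ Rabs (f x - L) >= eps.

Definition set_empty (S : R -> Prop) : Prop := forall x, ~ S x.

Definition set_finite (S : R -> Prop) : Prop :=
  exists l : list R, forall x, S x -> In x l.

Definition T1_lim (A : R -> Prop) (f : R -> R) (a L : R) : Prop :=
  forall eps, eps > 0 -> exists d, d > 0 /\ set_empty (exc_set A f a L d eps).

Definition T3_lim (A : R -> Prop) (f : R -> R) (a L : R) : Prop :=
  forall eps, eps > 0 -> exists d, d > 0 /\ set_finite (exc_set A f a L d eps).

(* Main.v *)
Require Import Defs.
From Stdlib Require Import Reals List Lra.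
Open Scope R_scope.

Lemma shrink (a : R) (l : list R) : forall d, d > 0 ->
  exists d', d' > 0 /\ d' <= d /\ forall x, In x l -> x <> a -> d' <= Rabs (x - a).
Proof.
  induction l as [|y l IH]; intros d Hd.
  - exists d; repeat split; try lra. intros x [].
  - destruct (IH d Hd) as [d1 [H1 [H2 H3]]].
    destruct (Req_dec y a) as [E|E].
    + exists d1; repeat split; try lra.
      intros x [<-|Hx] Hxa; [congruence| auto].
    + assert (Hp : Rabs (y - a) > 0) by (apply Rabs_pos_lt; lra).
      exists (Rmin d1 (Rabs (y - a))); repeat split.
      * apply Rmin_glb_lt; lra.
      * pose proof (Rmin_l d1 (Rabs (y-a))); lra.
      * intros x [<-|Hx] Hxa; [apply Rmin_r|].
        pose proof (Rmin_l d1 (Rabs (y-a))); pose proof (H3 x Hx Hxa); lra.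
Qed.

Theorem theorem1 (A : R -> Prop) (f : R -> R) (a L : R) :
  T1_lim A f a L <-> T3_lim A f a L.
Proof.
  split; intros H eps Heps; destruct (H eps Heps) as [d [Hd Hs]].
  - exists d; split; auto. exists nil. intros x Hx. exact (Hs x Hx).
  - destruct Hs as [l Hl].
    destruct (shrink a l d Hd) as [d' [H1 [H2 H3]]].
    exists d'; split; auto. intros x [[Hi Hne] [HA Hf]].
    assert (Hin : In x l) by (apply Hl; unfold exc_set; repeat split; auto; lra).
    pose proof (H3 x Hin Hne).
    unfold Rabs in *; destruct (Rcase_abs (x - a)); lra.
Qed.
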